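(* Fix $\kappa\in[0,1]$ and consider the optimization problem (SMOP2) $$\min_{(\mathbf a,\mathbf s)}\ f_\kappa(\bar{\mathbf a},\mathbf s):=\kappa\,\|\bar{\mathbf a}-\bar\zeta\|_2^2+(1-\kappa)\,\|\mathbf s\|_2^2$$ subject to $\mathbf z_i-\mathbf a_i=0$ and $\mathbf z_i\in\mathbb D_i$ for all $i\in[1:\mathcal I]$, and $(\bar{\mathbf a},\mathbf s)\in\mathbb S$, where $\bar{\mathbf a}=\frac1{\mathcal I}\sum_{i=1}^{\mathcal I}\mathbf a_i$. Then there exists an optimal solution $(\bar{\mathbf a}^\star,\mathbf s^\star)$ of (SMOP2). For $\kappa\in(0,1)$ this solution $(\bar{\mathbf a}^\star,\mathbf s^\star)$ is unique. Furthermore, for $\kappa=0$ the optimal value $h(\mathbf s^\star)=\|\mathbf s^\star\|_2^2$ is unique, and for $\kappa=1$ the optimal value $g(\bar{\mathbf a}^\star)=\|\bar{\mathbf a}^\star-\bar\zeta\|_2^2$ is unique; in particular, $\mathbf s^\star$ is unique for $\kappa=0$ and $\bar{\mathbf a}^\star$ is unique for $\kappa=1$.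
   Context: Setting (a network of $\mathcal I\in\mathbb N$ residential energy systems with batteries). Fix an integer horizon $N\ge 2$, a time $k\in\mathbb N_0$, a step length $T>0$, and write $[m:n]=\{m,m+1,\dots,n\}$. For each $i\in[1:\mathcal I]$ the following are given: constants $\alpha_i,\beta_i,\gamma_i\in(0,1]$, a capacity $C_i\ge0$, bounds $\underline u_i<0<\bar u_i$, an initial state $x_i(k)\in[0,C_i]$, and data $w_i(n)\in\mathbb R$ for $n\in[k:k+N-1]$. Let $\mathbb U_i$ be the set of $(u^-,u^+)\in\mathbb R^2$ with $\underline u_i\le u^-\le0$, $0\le u^+\le\bar u_i$ and $0\le u^-/\underline u_i+u^+/\bar u_i\le1$. Let $\mathbb D_i\subset\mathbb R^N$ be the set of vectors $\mathbf z_i=(z_i(k),\dots,z_i(k+N-1))^\top$ for which there exist $(u_i^-(n),u_i^+(n))\in\mathbb U_i$, $n\in[k:k+N-1]$, such that $x_i(n+1)=\alpha_i x_i(n)+T(\beta_iu_i^+(n)+u_i^-(n))\in[0,C_i]$ and $z_i(n)=w_i(n)+u_i^+(n)+\gamma_iu_i^-(n)$ for all $n\in[k:k+N-1]$. A reference vector $\bar\zeta\in\mathbb R^N$ and tube bounds $\underline{\mathbf c},\bar{\mathbf c}\in\mathbb R^N$ are given. Define $$\mathbb S=\Big\{(\bar{\mathbf z},\mathbf s)\in\mathbb R^N\times\mathbb R^{2N}_{\ge0}:\ \begin{pmatrix}I\\-I\end{pmatrix}\bar{\mathbf z}-\mathbf s\le\begin{pmatrix}\bar{\mathbf c}\\-\underline{\mathbf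 c}\end{pmatrix}\Big\}$$ (componentwise inequality, $I$ the $N\times N$ identity). The variables are $\mathbf a=(\mathbf a_1^\top,\dots,\mathbf a_{\mathcal I}^\top)^\top\in\mathbb R^{\mathcal IN}$ with $\mathbf a_i\in\mathbb R^N$, $\mathbf s\in\mathbb R^{2N}_{\ge0}$, and $\mathbf z_i\in\mathbb R^N$. *)

(* Defs.v *)
From HB Require Import structures.
From mathcomp Require Import all_boot all_order all_algebra.
From mathcomp Require Import reals.
Set Implicit Arguments. Unset Strict Implicit. Unset Printing Implicit Defensive.
Import Order.TTheory GRing.Theory Num.Theory.
Local Open Scope ring_scope.

Section Defs.
Variable R : realType.

Definition sqnorm (m : nat) (v : 'cV[R]_m) : R := \sum_(j < m) (v j 0) ^+ 2.

Definition inU (ulo uhi um up : R) : Prop :=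
  [/\ ulo <= um <= 0, 0 <= up <= uhi & 0 <= um / ulo + up / uhi <= 1].

(* z \in D_i : there exist inputs u^-, u^+ (indexed by absolute time n) and a
   state trajectory x (x k = initial state x_i(k)) such that for all
   n in [k : k+N-1]: (u^-(n),u^+(n)) \in U_i,
   x(n+1) = alpha x(n) + T (beta u^+(n) + u^-(n)) \in [0, C], and
   z(n) = w(n) + u^+(n) + gamma u^-(n); entry j of z is z(k+j). *)
Definition inD (N k : nat) (T alpha beta gamma C ulo uhi x0 : R)
    (w : nat -> R) (z : 'cV[R]_N) : Prop :=
  exists (um up x : nat -> R),
    x k = x0 /\
    (forall n, (k <= n < k + N)%N ->
       [/\ inU ulo uhi (um n) (up n),
           x n.+1 = alpha * x n + T * (beta * up n + um n)
         & 0 <= x n.+1 <= C]) /\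
    (forall j : 'I_N, z j 0 = w (k + j)%N + up (k + j)%N + gamma * um (k + j)%N).

Definition inS (N : nat) (clo cup : 'cV[R]_N) (zb : 'cV[R]_N) (s : 'cV[R]_(N + N))
    : Prop :=
  (forall j, 0 <= s j 0) /\
  (forall j, ((col_mx 1%:M (- 1%:M)) *m zb - s) j 0 <= (col_mx cup (- clo)) j 0).

Definition abar (I N : nat) (a : 'I_I -> 'cV[R]_N) : 'cV[R]_N :=
  (I%:R)^-1 *: \sum_(i < I) a i.

Definition fobj (N : nat) (kappa : R) (zeta ab : 'cV[R]_N) (s : 'cV[R]_(N + N)) : R :=
  kappa * sqnorm (ab - zeta) + (1 - kappa) * sqnorm s.

End Defs.

(* Main.v *)
Require Import Defs.
From HB Require Import structures.
From mathcomp Require Import all_boot all_order all_algebra.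
From mathcomp Require Import reals.
Import Order.TTheory GRing.Theory Num.Theory.
Local Open Scope ring_scope.
From mathcomp Require Import all_classical all_reals all_analysis.
From mathcomp Require Import ring lra zify.
Import Order.TTheory GRing.Theory Num.Theory.
Import numFieldNormedType.Exports.
Local Open Scope classical_set_scope.
Local Open Scope ring_scope.

Lemma sqnorm_ge0 (R : realType) m (v : 'cV[R]_m) : 0 <= sqnorm v.
Proof. by apply: sumr_ge0 => j _; exact: sqr_ge0. Qed.

Lemma sqnorm_eq0 (R : realType) m (v : 'cV[R]_m) : sqnorm v = 0 -> v = 0.
Proof.
move=> /eqP; rewrite psumr_eq0 => [H|j _]; last exact: sqr_ge0.
apply/matrixP => i j; rewrite (ord1 j) mxE.
by move/allP: H => /(_ i (mem_index_enum _)); rewrite sqrf_eq0 => /eqP.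
Qed.

Lemma sqnorm_mid (R : realType) m (u v : 'cV[R]_m) :
  sqnorm (2^-1 *: (u + v)) = (sqnorm u + sqnorm v) / 2 - sqnorm (u - v) / 4.
Proof.
rewrite /sqnorm -big_split /= !mulr_suml -sumrB; apply: eq_bigr => j _.
by rewrite !mxE; field.
Qed.

Lemma abar_mid (R : realType) I N (a a' : 'I_I -> 'cV[R]_N) :
  abar (fun i => 2^-1 *: (a i + a' i)) = 2^-1 *: (abar a + abar a').
Proof.
rewrite /abar -scaler_sumr big_split /= -scalerDr !scalerA mulrC //.
Qed.

Lemma inU_mid (R : realType) (ulo uhi a b a' b' : R) : ulo < 0 -> 0 < uhi ->
  inU ulo uhi a b -> inU ulo uhi a' b' -> inU ulo uhi ((a + a') / 2) ((b + b') / 2).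
Proof.
move=> hl hu [/andP[h1 h2] /andP[h3 h4] /andP[h5 h6]] [/andP[h1' h2'] /andP[h3' h4'] /andP[h5' h6']].
have E : (a + a') / 2 / ulo + (b + b') / 2 / uhi = ((a / ulo + b / uhi) + (a' / ulo + b' / uhi)) / 2.
  by rewrite !mulrDl; ring.
split; rewrite ?E; apply/andP; split; lra.
Qed.

Lemma inD_mid (R : realType) N k (T al be ga C lo hi x0 : R) w (z z' : 'cV[R]_N) :
  lo < 0 -> 0 < hi ->
  inD k T al be ga C lo hi x0 w z -> inD k T al be ga C lo hi x0 w z' ->
  inD k T al be ga C lo hi x0 w (2^-1 *: (z + z')).
Proof.
move=> hl hh [um [up [x [hx0 [H Hz]]]]] [um' [up' [x' [hx0' [H' Hz']]]]].
exists (fun n => (um n + um' n) / 2), (fun n => (up n + up' n) / 2),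
  (fun n => (x n + x' n) / 2); split; first by rewrite hx0 hx0'; field.
split.
  move=> n hn; have [h1 h2 /andP[h3 h4]] := H n hn; have [h1' h2' /andP[h3' h4']] := H' n hn.
  split; first exact: inU_mid.
    by rewrite h2 h2'; field.
  apply/andP; split; lra.
by move=> j; rewrite !mxE Hz Hz'; field.
Qed.

Lemma inS_mid (R : realType) N (clo cup zb zb' : 'cV[R]_N) (s s' : 'cV[R]_(N + N)) :
  inS clo cup zb s -> inS clo cup zb' s' ->
  inS clo cup (2^-1 *: (zb + zb')) (2^-1 *: (s + s')).
Proof.
move=> [hs H] [hs' H']; split.
  move=> j; rewrite !mxE; have := hs j; have := hs' j; lra.
set M := col_mx _ _.
have E : M *m (2^-1 *: (zb + zb')) - 2^-1 *: (s + s') =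
   2^-1 *: ((M *m zb - s) + (M *m zb' - s')).
  by rewrite -scalemxAr mulmxDr -scalerBr; congr (_ *: _); rewrite addrACA opprD.
move=> j; rewrite E mxE [X in 2^-1 * X]mxE; have := H j; have := H' j; lra.
Qed.
Lemma cD {R : realType} {V : topologicalType} (f g : V -> R) :
  continuous f -> continuous g -> continuous (fun p => f p + g p).
Proof. move=> cf cg x; exact: (cvgD (cf x) (cg x)). Qed.
Lemma cN {R : realType} {V : topologicalType} (f : V -> R) :
  continuous f -> continuous (fun p => - f p).
Proof. move=> cf x; exact: (cvgN (cf x)). Qed.
Lemma cM {R : realType} {V : topologicalType} (f g : V -> R) :
  continuous f -> continuous g -> continuous (fun p => f p * g p).
Proof. move=> cf cg x; exact: (cvgM (cf x) (cg x)). Qed.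
Lemma cC {R : realType} {V : topologicalType} (c : R) :
  continuous (fun _ : V => c).
Proof. move=> x; exact: cvg_cst. Qed.
Lemma cMax {R : realType} {V : topologicalType} (f : V -> R) :
  continuous f -> continuous (fun p => Num.max (f p) 0).
Proof.
move=> cf; have -> : (fun p => Num.max (f p) 0) = (fun p => (f p + `|f p|) * 2^-1).
  apply: funext => p; rewrite maxr_absE subr0 addr0 //.
apply: cM; last exact: cC.
apply: cD => // x; apply: continuous_comp; first exact: cf.
exact: norm_continuous.
Qed.
Lemma cCoord {R : realType} n (l : 'I_n) : continuous (fun p : 'rV[R]_n => p ord0 l).
Proof. exact: coord_continuous. Qed.
Lemma cSum {R : realType} {V : topologicalType} (J : finType) (f : J -> V -> R) :
  (forall j, continuous (f j)) -> continuous (fun p => \sum_j f j p).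
Proof.
move=> cf; rewrite unlock /=; elim: (index_enum J) => [|j r IH] /=.
  exact: cC.
exact: cD.
Qed.
Lemma closed_ge0 {R : realType} {V : topologicalType} (g : V -> R) :
  continuous g -> closed [set p | 0 <= g p].
Proof.
move=> cg; have -> : [set p | 0 <= g p] = g @^-1` [set x | 0 <= x] by [].
apply: preimage_closed; first by move=> x _; exact: cg.
exact: closed_ge.
Qed.
Lemma closed_all {V : topologicalType} (J : Type) (S : J -> set V) :
  (forall j, closed (S j)) -> closed [set p | forall j, S j p].
Proof.
move=> cS; have -> : [set p | forall j, S j p] = \bigcap_(j in setT) S j.
  by apply/seteqP; split => p /= H j //; apply: H.
by apply: closed_bigI => j _; exact: cS.
Qed.
Lemma closed_and {V : topologicalType} (A B : set V) :
  closed A -> closed B -> closed [set p | A p /\ B p].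
Proof. move=> cA cB; exact: closedI. Qed.

Lemma inS_split (R : realType) N (clo cup zb : 'cV[R]_N) (s : 'cV[R]_(N + N)) :
  inS clo cup zb s <-> (forall j : 'I_N, [/\ 0 <= s (lshift N j) 0, 0 <= s (rshift N j) 0,
     zb j 0 - s (lshift N j) 0 <= cup j 0 & - zb j 0 - s (rshift N j) 0 <= - clo j 0]).
Proof.
have E : col_mx 1%:M (- 1%:M) *m zb - s =
   col_mx (zb - usubmx s) (- zb - dsubmx s).
  by rewrite mul_col_mx mul1mx mulNmx mul1mx -{1}(vsubmxK s) opp_col_mx add_col_mx.
rewrite /inS E; split.
  move=> [h1 h2] j; split; [exact: h1|exact: h1| |].
    by have := h2 (lshift N j); rewrite !col_mxEu !mxE.
  by have := h2 (rshift N j); rewrite !col_mxEd !mxE.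
move=> H; split=> j; rewrite -[j](@splitK N N); case: (fintype.split j) => j' /=; have [h1 h2 h3 h4] := H j' => //.
  by rewrite !col_mxEu !mxE.
by rewrite !col_mxEd !mxE.
Qed.

Lemma sqnorm_split (R : realType) N (s : 'cV[R]_(N + N)) :
  sqnorm s = \sum_(j < N) (s (lshift N j) 0) ^+ 2 + \sum_(j < N) (s (rshift N j) 0) ^+ 2.
Proof. by rewrite /sqnorm big_split_ord. Qed.

Lemma entryB (R : realType) m n (u v : 'M[R]_(m, n)) i j : (u - v) i j = u i j - v i j.
Proof. by rewrite !mxE. Qed.

Definition spos (R : realType) N (clo cup zb : 'cV[R]_N) : 'cV[R]_(N + N) :=
  col_mx (map_mx (fun t => Num.max t 0) (zb - cup)) (map_mx (fun t => Num.max t 0) (clo - zb)).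

Arguments spos {R N}.

Lemma max0_ge0 (R : realType) (t : R) : 0 <= Num.max t 0.
Proof. by rewrite le_max lexx orbT. Qed.
Lemma max0_ge (R : realType) (t : R) : t <= Num.max t 0.
Proof. by rewrite le_max lexx. Qed.
Lemma max0_le (R : realType) (t s : R) : 0 <= s -> t <= s -> Num.max t 0 <= s.
Proof. by move=> h1 h2; rewrite ge_max h1 h2. Qed.

Lemma spos_inS (R : realType) N (clo cup zb : 'cV[R]_N) : inS clo cup zb (spos clo cup zb).
Proof.
apply/inS_split => j; rewrite /spos col_mxEu col_mxEd !mxE.
split; rewrite ?max0_ge0 //.
  by have := @max0_ge _ (zb j 0 - cup j 0); lra.
by have := @max0_ge _ (clo j 0 - zb j 0); lra.
Qed.

Lemma spos_min (R : realType) N (kappa : R) (zeta clo cup zb : 'cV[R]_N) s :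
  0 <= kappa <= 1 -> inS clo cup zb s ->
  fobj kappa zeta zb (spos clo cup zb) <= fobj kappa zeta zb s.
Proof.
move=> /andP[k0 k1] /inS_split H; rewrite /fobj lerD2l; apply: ler_wpM2l; first lra.
rewrite !sqnorm_split /spos; apply: lerD; apply: ler_sum => j _;
  rewrite ?col_mxEu ?col_mxEd !mxE; have [h1 h2 h3 h4] := H j.
  have h : Num.max (zb j 0 - cup j 0) 0 <= s (lshift N j) 0 by apply: max0_le; lra.
  have := @max0_ge0 _ (zb j 0 - cup j 0); nra.
have h : Num.max (clo j 0 - zb j 0) 0 <= s (rshift N j) 0 by apply: max0_le; lra.
have := @max0_ge0 _ (clo j 0 - zb j 0); nra.
Qed.

Lemma key_ineq (R : realType) N (kappa : R) (zeta ab ab' : 'cV[R]_N) (s s' : 'cV[R]_(N + N)) :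
  0 <= kappa <= 1 ->
  fobj kappa zeta ab s <= fobj kappa zeta (2^-1 *: (ab + ab')) (2^-1 *: (s + s')) ->
  fobj kappa zeta ab' s' <= fobj kappa zeta ab s ->
  fobj kappa zeta ab s <= fobj kappa zeta ab' s' ->
  kappa * sqnorm (ab - ab') = 0 /\ (1 - kappa) * sqnorm (s - s') = 0.
Proof.
move=> /andP[k0 k1]; rewrite /fobj.
have -> : 2^-1 *: (ab + ab') - zeta = 2^-1 *: ((ab - zeta) + (ab' - zeta)).
  by apply/matrixP => i j; rewrite !mxE; field.
rewrite !sqnorm_mid.
have -> : (ab - zeta) - (ab' - zeta) = ab - ab' by rewrite opprB addrA subrK.
have d0 := @sqnorm_ge0 _ _ (ab - ab'); have e0 := @sqnorm_ge0 _ _ (s - s').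
have p1 : 0 <= kappa * sqnorm (ab - ab') by apply: mulr_ge0.
have p2 : 0 <= (1 - kappa) * sqnorm (s - s') by apply: mulr_ge0; lra.
move=> h1 h2 h3; split; nra.
Qed.

Lemma exists_opt (R : realType) (I N k : nat) (T : R)
  (alpha beta gamma C ulo uhi x0 : 'I_I -> R) (w : 'I_I -> nat -> R)
  (zeta clo cup : 'cV[R]_N.+1) (kappa : R) :
  (forall i, 0 < alpha i <= 1) ->
  (forall i, ulo i < 0 < uhi i) -> (forall i, 0 <= x0 i <= C i) ->
  0 <= kappa <= 1 ->
  exists (a : 'I_I -> 'cV[R]_N.+1) (s : 'cV[R]_(N.+1 + N.+1)),
   ((exists z : 'I_I -> 'cV[R]_N.+1, forall i, z i - a i = 0 /\
        inD k T (alpha i) (beta i) (gamma i) (C i) (ulo i) (uhi i) (x0 i) (w i) (z i))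
    /\ inS clo cup (abar a) s) /\
   forall a' s',
   ((exists z : 'I_I -> 'cV[R]_N.+1, forall i, z i - a' i = 0 /\
        inD k T (alpha i) (beta i) (gamma i) (C i) (ulo i) (uhi i) (x0 i) (w i) (z i))
    /\ inS clo cup (abar a') s') ->
   fobj kappa zeta (abar a) s <= fobj kappa zeta (abar a') s'.
Proof.
move=> halpha hu hx0 hk.
pose n := (I * (N.+1 + N.+1))%N.
pose pm (p : 'rV[R]_n) i (j : 'I_N.+1) := p ord0 (mxvec_index i (lshift N.+1 j)).
pose pp (p : 'rV[R]_n) i (j : 'I_N.+1) := p ord0 (mxvec_index i (rshift N.+1 j)).
pose UM p i (m : nat) := pm p i (inord (m - k)).
pose UP p i (m : nat) := pp p i (inord (m - k)).
pose xs p i := fix xs (j : nat) := if j is j'.+1 then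
   alpha i * xs j' + T * (beta i * UP p i (k + j')%N + UM p i (k + j')%N) else x0 i.
pose zp p i : 'cV[R]_N.+1 := \col_(j < N.+1) (w i (k + j)%N + UP p i (k + j)%N + gamma i * UM p i (k + j)%N).
pose ab p := abar (zp p).
pose pos (t : R) := Num.max t 0.
pose sp p := spos clo cup (ab p).
pose F p := fobj kappa zeta (ab p) (sp p).
pose A := [set p : 'rV[R]_n | forall i (j : 'I_N.+1),
   0 <= pm p i j - ulo i /\ 0 <= - pm p i j /\ 0 <= pp p i j /\ 0 <= uhi i - pp p i j /\
   0 <= pm p i j / ulo i + pp p i j / uhi i /\ 0 <= 1 - (pm p i j / ulo i + pp p i j / uhi i) /\
   0 <= xs p i j.+1 /\ 0 <= C i - xs p i j.+1].
have cpm i j : continuous (fun p => pm p i j) by move=> p; exact: cCoord.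
have cpp i j : continuous (fun p => pp p i j) by move=> p; exact: cCoord.
have cxs i j : continuous (fun p => xs p i j).
  elim: j => [|j IH] /=; first exact: cC.
  apply: cD; first exact: cM (cC _) IH.
  apply: cM; first exact: cC.
  by apply: cD; [apply: cM; [exact: cC|exact: cpp]|exact: cpm].
have clA : closed A.
  apply: closed_all => i; apply: closed_all => j.
  apply: closed_and; [apply: closed_ge0; apply: cD; [exact: cpm|exact: cC]|].
  apply: closed_and; [apply: closed_ge0; apply: cN; exact: cpm|].
  apply: closed_and; [apply: closed_ge0; exact: cpp|].
  apply: closed_and; [apply: closed_ge0; apply: cD; [exact: cC|apply: cN; exact: cpp]|].
  have cr : continuous (fun p => pm p i j / ulo i + pp p i j / uhi i).
    by apply: cD; apply: cM; [exact: cpm|exact: cC|exact: cpp|exact: cC].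
  apply: closed_and; [exact: closed_ge0|].
  apply: closed_and; [apply: closed_ge0; apply: cD; [exact: cC|exact: cN]|].
  apply: closed_and; apply: closed_ge0; [exact: cxs|apply: cD; [exact: cC|apply: cN; exact: cxs]].
pose M := \sum_i (uhi i - ulo i).
have hM i : uhi i - ulo i <= M.
  rewrite /M (bigD1 i) //= lerDl; apply: sumr_ge0 => i' _.
  by have /andP[h1 h2] := hu i'; lra.
have cA : compact A.
  have cB := @rV_compact R n (fun _ => `[-M, M]%classic) (fun _ => @segment_compact R (-M) M).
  apply: (subclosed_compact clA cB) => p Ap l /=.
  case: (mxvec_indexP l) => i j.
  rewrite -[j](@splitK N.+1 N.+1); case: (fintype.split j) => j' /=;
    have := hM i; have /andP[h1 h2] := hu i;
    have [h3 [h4 [h5 [h6 _]]]] := Ap i j'; rewrite /pm /pp in h3 h4 h5 h6;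
    rewrite in_itv /= => hMi; apply/andP; split; lra.
have A0 : A !=set0.
  exists 0 => i j.
  have E m : UP 0 i m = 0 /\ UM 0 i m = 0 by rewrite /UP /UM /pp /pm !mxE.
  have hx m : 0 <= xs 0 i m <= C i.
    elim: m => [|m IH] /=; first exact: hx0.
    have [-> ->] := E (k + m)%N; have /andP[a1 a2] := halpha i.
    rewrite !mulr0 !addr0; apply/andP; split; nra.
  have /andP[h1 h2] := hu i; have /andP[h3 h4] := hx (j.+1).
  rewrite /pm /pp !mxE !mul0r !addr0; do !split; lra.
have cab j : continuous (fun p => ab p j 0).
  have -> : (fun p => ab p j 0) = (fun p => I%:R^-1 * \sum_i
      (w i (k + j)%N + UP p i (k + j)%N + gamma i * UM p i (k + j)%N)).
    by apply: funext => p; rewrite /ab /abar mxE summxE; congr (_ * _);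
      apply: eq_bigr => i _; rewrite mxE.
  apply: cM; first exact: cC.
  apply: cSum => i; apply: cD; first (apply: cD; [exact: cC|exact: cpp]).
  by apply: cM; [exact: cC|exact: cpm].
have cX2 (f : 'rV[R]_n -> R) : continuous f -> continuous (fun p => f p ^+ 2).
  move=> cf; have -> : (fun p => f p ^+ 2) = (fun p => f p * f p).
    by apply: funext => p; rewrite expr2.
  exact: cM.
have cF : continuous F.
  rewrite /F /fobj; apply: cD; apply: cM; try exact: cC.
    rewrite /sqnorm; apply: cSum => j; apply: cX2.
    have -> : (fun p => (ab p - zeta) j 0) = (fun p => ab p j 0 - zeta j 0).
    apply: funext => p; exact: entryB.
    by apply: cD; [exact: cab|exact: cC].
  have -> : (fun p => sqnorm (sp p)) = (fun p => \sum_(j < N.+1) (pos (ab p j 0 - cup j 0)) ^+ 2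
       + \sum_(j < N.+1) (pos (clo j 0 - ab p j 0)) ^+ 2).
    apply: funext => p; rewrite sqnorm_split; congr (_ + _); apply: eq_bigr => j _;
    by rewrite /sp /spos ?col_mxEu ?col_mxEd !mxE.
  by apply: cD; apply: cSum => j; apply: cX2; apply: cMax; apply: cD;
    try exact: cab; try exact: cC; apply: cN; exact: cab.
have [c Ac Fmin] := compact_EVT_min A0 cA (@continuous_subspaceT _ _ A _ cF).
rewrite inE in Ac.
exists (zp c), (sp c); split.
  split; last exact: spos_inS.
  exists (zp c) => i; split; first exact: subrr.
  exists (UM c i), (UP c i), (fun m => xs c i (m - k)%N); split; first by rewrite subnn.
  split; last by move=> j; rewrite mxE.
  move=> m /andP[hkm hmk].
  have hj : (m - k < N.+1)%N by lia.
  pose J : 'I_N.+1 := inord (m - k)%N.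
  have e1 : UM c i m = pm c i J by [].
  have e2 : UP c i m = pp c i J by [].
  have [h1 [h2 [h3 [h4 [h5 [h6 [h7 h8]]]]]]] := Ac i J.
  rewrite /J inordK // in h7 h8.
  rewrite e1 e2 subSn //; split.
  - by rewrite /inU; split; apply/andP; split; lra.
  - by rewrite /= subnKC.
  - by apply/andP; split; lra.
move=> a' s' [[z' Hz'] hs'].
have H3 : forall i, exists t : (nat -> R) * (nat -> R) * (nat -> R), t.2 k = x0 i /\
   (forall m, (k <= m < k + N.+1)%N -> [/\ inU (ulo i) (uhi i) (t.1.1 m) (t.1.2 m),
      t.2 m.+1 = alpha i * t.2 m + T * (beta i * t.1.2 m + t.1.1 m) & 0 <= t.2 m.+1 <= C i]) /\
   (forall j : 'I_N.+1, z' i j 0 = w i (k + j)%N + t.1.2 (k + j)%N + gamma i * t.1.1 (k + j)%N).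
  by move=> i; have [_ [um [up [x H]]]] := Hz' i; exists (um, up, x).
have [f Hf] := choice H3.
pose p' : 'rV[R]_n := mxvec (row_mx (\matrix_(i, j) (f i).1.1 (k + j)%N)
                                    (\matrix_(i, j) (f i).1.2 (k + j)%N)).
have epm i j : pm p' i j = (f i).1.1 (k + j)%N by rewrite /pm /p' mxvecE row_mxEl mxE.
have epp i j : pp p' i j = (f i).1.2 (k + j)%N by rewrite /pp /p' mxvecE row_mxEr mxE.
have eUM i (j : nat) : (j < N.+1)%N -> UM p' i (k + j)%N = (f i).1.1 (k + j)%N.
  by move=> hj; rewrite /UM addKn epm inordK.
have eUP i (j : nat) : (j < N.+1)%N -> UP p' i (k + j)%N = (f i).1.2 (k + j)%N.
  by move=> hj; rewrite /UP addKn epp inordK.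
have exs i j : (j <= N.+1)%N -> xs p' i j = (f i).2 (k + j)%N.
  elim: j => [|j IH] hj /=; first by rewrite addn0 (Hf i).1.
  have hjk : (k <= k + j < k + N.+1)%N by lia.
  have [_ hrec _] := (Hf i).2.1 _ hjk.
  by rewrite addnS hrec IH ?(ltnW hj) // eUM // eUP.
have Ap' : p' \in A.
  rewrite inE => i j.
  have hjk : (k <= k + j < k + N.+1)%N by have := ltn_ord j; lia.
  have [[/andP[h1 h2] /andP[h3 h4] /andP[h5 h6]] _ /andP[h7 h8]] := (Hf i).2.1 _ hjk.
  rewrite epm epp exs // addnS; do !split; lra.
have ezp : zp p' = a'.
  apply: funext => i; apply/matrixP => j j0; rewrite (ord1 j0) mxE eUP // eUM //.
  rewrite -(Hf i).2.2; have [/eqP + _] := Hz' i; rewrite subr_eq0 => /eqP ->.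
  by [].
apply: le_trans (Fmin _ Ap') _.
rewrite /F /sp /ab ezp; exact: spos_min.
Qed.

Theorem proposition1 (R : realType) (I N k : nat) (T : R)
  (alpha beta gamma C ulo uhi x0 : 'I_I -> R) (w : 'I_I -> nat -> R)
  (zeta clo cup : 'cV[R]_N) (kappa : R) :
  (0 < I)%N -> (2 <= N)%N -> 0 < T ->
  (forall i, 0 < alpha i <= 1) -> (forall i, 0 < beta i <= 1) ->
  (forall i, 0 < gamma i <= 1) -> (forall i, 0 <= C i) ->
  (forall i, ulo i < 0 < uhi i) -> (forall i, 0 <= x0 i <= C i) ->
  0 <= kappa <= 1 ->
  let feasible (a : 'I_I -> 'cV[R]_N) (s : 'cV[R]_(N + N)) : Prop :=
    (exists z : 'I_I -> 'cV[R]_N, forall i, z i - a i = 0 /\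
        inD k T (alpha i) (beta i) (gamma i) (C i) (ulo i) (uhi i) (x0 i) (w i) (z i))
    /\ inS clo cup (abar a) s in
  let optimal a s : Prop :=
    feasible a s /\
    forall a' s', feasible a' s' ->
      fobj kappa zeta (abar a) s <= fobj kappa zeta (abar a') s' in
  (exists a s, optimal a s) /\
  (0 < kappa < 1 -> forall a s a' s', optimal a s -> optimal a' s' ->
     abar a = abar a' /\ s = s') /\
  (kappa = 0 -> forall a s a' s', optimal a s -> optimal a' s' ->
     sqnorm s = sqnorm s' /\ s = s') /\
  (kappa = 1 -> forall a s a' s', optimal a s -> optimal a' s' ->
     sqnorm (abar a - zeta) = sqnorm (abar a' - zeta) /\ abar a = abar a').
Proof.
case: N zeta clo cup => [|N] zeta clo cup; first by move=> _.
move=> hI hN hT hal hbe hga hC hu hx0 hk feasible optimal.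
have feas_mid a s a' s' : feasible a s -> feasible a' s' ->
    feasible (fun i => 2^-1 *: (a i + a' i)) (2^-1 *: (s + s')).
  move=> [[z Hz] hs] [[z' Hz'] hs']; split; last by rewrite abar_mid; exact: inS_mid.
  exists (fun i => 2^-1 *: (z i + z' i)) => i; split.
    have [/eqP + _] := Hz i; rewrite subr_eq0 => /eqP ->.
    by have [/eqP + _] := Hz' i; rewrite subr_eq0 => /eqP ->; rewrite subrr.
  have /andP[h1 h2] := hu i.
  by apply: inD_mid => //; [exact: (Hz i).2 | exact: (Hz' i).2].
have key a s a' s' : optimal a s -> optimal a' s' ->
    kappa * sqnorm (abar a - abar a') = 0 /\ (1 - kappa) * sqnorm (s - s') = 0.
  move=> Ho Ho'; apply: key_ineq => //.
  - by rewrite -abar_mid; apply: Ho.2; apply: feas_mid; [exact: Ho.1|exact: Ho'.1].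
  - by apply: Ho'.2; exact: Ho.1.
  - by apply: Ho.2; exact: Ho'.1.
have eq0 m (v v' : 'cV[R]_m) c : 0 < c -> c * sqnorm (v - v') = 0 -> v = v'.
  move=> c0 /eqP; rewrite mulf_eq0 gt_eqF //= => /eqP /sqnorm_eq0 /eqP.
  by rewrite subr_eq0 => /eqP.
split.
  have [a [s H]] := @exists_opt R I N k T alpha beta gamma C ulo uhi x0 w zeta clo cup kappa hal hu hx0 hk.
  by exists a, s; exact: H.
split.
  move=> /andP[k0 k1] a s a' s' Ho Ho'; have [e1 e2] := key a s a' s' Ho Ho'.
  by split; [apply: eq0 e1 | apply: (eq0 _ _ _ (1 - kappa)) e2; lra].
split.
  move=> k0 a s a' s' Ho Ho'; have [_ e2] := key a s a' s' Ho Ho'.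
  by have -> : s = s' by apply: (eq0 _ _ _ (1 - kappa)) e2; lra.
move=> k1 a s a' s' Ho Ho'; have [e1 _] := key a s a' s' Ho Ho'.
by have -> : abar a = abar a' by apply: (eq0 _ _ _ kappa) e1; lra.
Qed.
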